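(* In the setting below, suppose $\max_{g\in G_-}|\delta(g)|\ge E_k-\lfloor E_k\rfloor_2+2$. Then there exists $g_{k+1}\in\mathrm{Co}_0$ such that $S_{k+1}=g_{k+1}S\setminus U_k$ satisfies $|S_{k+1}|\ge |S|+2-\lfloor E_k\rfloor_2$, and $S_1,\dots,S_{k+1}$ are pairwise disjoint.
   Context: Let $\Lambda_{24}$ be the Leech lattice scaled so minimal vectors have length $2$, $\mathcal C$ its $196560$ minimal vectors, and $\mathrm{Co}_0$ the finite group of linear isometries of $\mathbb{R}^{24}$ mapping $\Lambda_{24}$ onto itself (acting transitively on $\mathcal C$). Fix an antipodal ($S=-S$) set $S\subseteq\mathcal C$ with $\langle x,y\rangle\le1$ for distinct $x,y\in S$. Let $k\ge1$, $S_1=S$, $g_1=\mathrm{id}$, and for $2\le j\le k$, $S_j=g_jS\setminus(S_1\cup\dots\cup S_{j-1})$ for some $g_j\in\mathrm{Co}_0$, with $|S_j|\ge|S|\bigl(1-\sum_{i<j}|S_i|/|\mathcal C|\bigr)$. Put $U_k=S_1\cup\dots\cup S_k$, $E_k=\mathbb{E}_g|gS\cap U_k|$ ($g$ uniform in $\mathrm{Co}_0$). $\lfloor x\rfloor_2$ is the greatest even integer $\le x$. $\delta(g)=|gS\cap U_k|-E_k$, $G_-=\{g:\delta(g)<0\}$. *)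

(* Defs.v *)
From HB Require Import structures.
From mathcomp Require Import all_boot all_order all_fingroup all_algebra.
From mathcomp Require Import boolp reals.
Set Implicit Arguments. Unset Strict Implicit. Unset Printing Implicit Defensive.
Import Order.TTheory GRing.Theory Num.Theory.
Local Open Scope ring_scope.

(* Generated by the 12 rows below (bit i of the number = coordinate i);
   this is the extended quadratic-residue code of length 24, i.e. a binary
   Golay code (weight enumerator 1 + 759 z^8 + 2576 z^12 + 759 z^16 + z^24). *)
Definition golay_gens : seq nat :=
  [:: 8729438; 1005026; 1179174; 2927022; 5637822; 42195;
      84390; 145311; 290622; 15946; 17118; 7973]%N.

Definition golay_gen (j : 'I_12) (i : 'I_24) : bool :=
  odd (nth 0%N golay_gens j %/ 2 ^ i).

Definition golay (c : 'I_24 -> bool) : bool :=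
  [exists a : {ffun 'I_12 -> bool},
     [forall i : 'I_24, c i == odd (\sum_(j < 12) (a j && golay_gen j i))%N]].

(* x : Z^24 lies in sqrt(8) * Lambda_24 iff there is m in {0,1} with
   x_i = m (mod 2) for all i, the set {i | x_i = 2 (mod 4)} (m = 0), resp.
   {i | x_i = 1 (mod 4)} (m = 1), is a Golay codeword, and
   sum_i x_i = 4 m (mod 8).  (Conway--Sloane, SPLAG ch. 4 sec. 11.) *)
Definition leechZ (x : 'I_24 -> int) : bool :=
  ([forall i, (x i %% 2)%Z == 0] &&
   golay (fun i => (x i %% 4)%Z == 2) &&
   ((\sum_(i < 24) x i) %% 8 == 0)%Z)
  ||
  ([forall i, (x i %% 2)%Z == 1] &&
   golay (fun i => (x i %% 4)%Z == 1) &&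
   ((\sum_(i < 24) x i) %% 8 == 4)%Z).

Definition leechR {R : realType} (u : 'rV[R]_24) : Prop :=
  exists x : 'I_24 -> int, leechZ x /\ u = \row_i ((x i)%:~R / Num.sqrt 8).

(* Coordinates of sqrt(8)*v for a minimal vector v satisfy sum x_i^2 = 32,
   hence |x_i| <= 5; we encode x_i as an element of 'I_11 shifted by 5. *)
Definition bvec := {ffun 'I_24 -> 'I_11}.
Definition coord (v : bvec) (i : 'I_24) : int := (v i)%:Z - 5.

Definition minvecb (v : bvec) : bool :=
  leechZ (coord v) && (\sum_(i < 24) coord v i ^+ 2 == 32).

Definition Cmin := {v : bvec | minvecb v}.

Definition rv {R : realType} (c : Cmin) : 'rV[R]_24 :=
  \row_i ((coord (val c) i)%:~R / Num.sqrt 8).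

Definition inner {R : realType} (u w : 'rV[R]_24) : R := (u *m w^T) 0 0.

Definition Co0mx {R : realType} (M : 'M[R]_24) : Prop :=
  M *m M^T = 1%:M /\ (forall u : 'rV[R]_24, leechR u <-> leechR (u *m M)).

(* Co_0 represented faithfully through its (injective, since C spans R^24)
   permutation action on C: the permutations of C induced by some element. *)
Definition Co0 (R : realType) : {set {perm Cmin}} :=
  [set s : {perm Cmin} | `[< exists M : 'M[R]_24,
       Co0mx M /\ forall c : Cmin, rv (s c) = rv c *m M >]].

(* U S g j = S_1 u ... u S_j,  Sseq S g j = S_j = g_j S \ U_{j-1}   (j >= 1). *)
Fixpoint Useq (S : {set Cmin}) (g : nat -> {perm Cmin}) (j : nat)
  : {set Cmin} :=
  match j with
  | 0 => set0
  | j'.+1 => Useq S g j' :|: ((g j) @: S :\: Useq S g j')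
  end.

Definition Sseq (S : {set Cmin}) (g : nat -> {perm Cmin}) (j : nat)
  : {set Cmin} :=
  match j with
  | 0 => set0
  | j'.+1 => (g j) @: S :\: Useq S g j'
  end.

Definition Eexp (R : realType) (S U : {set Cmin}) : R :=
  (\sum_(s in Co0 R) (#|s @: S :&: U|%:R : R)) / (#|Co0 R|%:R).

Definition delta (R : realType) (S U : {set Cmin}) (s : {perm Cmin}) : R :=
  (#|s @: S :&: U|%:R : R) - Eexp R S U.

Definition Gminus (R : realType) (S U : {set Cmin}) : {set {perm Cmin}} :=
  [set s in Co0 R | delta R S U s < 0].

(* max over G_- of |delta| (all terms are >= 0, so the default 0 is harmless). *)
Definition maxdev (R : realType) (S U : {set Cmin}) : R :=
  \big[Num.max/0]_(s in Gminus R S U) `|delta R S U s|.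

Definition floor2 {R : realType} (x : R) : int := 2 * Num.floor (x / 2).

Definition extend (g : nat -> {perm Cmin}) (k : nat) (h : {perm Cmin}) :=
  fun j : nat => if j == k.+1 then h else g j.

(* Main.v *)
Require Import Defs.
From HB Require Import structures.
From mathcomp Require Import all_boot all_order all_fingroup all_algebra.
From mathcomp Require Import boolp reals.
From mathcomp Require Import lra.
Import Order.TTheory GRing.Theory Num.Theory.
Local Open Scope ring_scope.

Lemma Useq_ext (S : {set Cmin}) (g g' : nat -> {perm Cmin}) k :
  (forall j, (j <= k)%N -> g j = g' j) -> Useq S g k = Useq S g' k.
Proof.
elim: k => [//|k IH] H /=.
rewrite IH; last by move=> j hj; apply: H; apply: leqW.
by rewrite H.
Qed.

Lemma Useq_mono (S : {set Cmin}) g i m : (i <= m)%N -> Useq S g i \subset Useq S g m.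
Proof.
elim: m => [|m IH]; first by rewrite leqn0 => /eqP ->.
rewrite leq_eqVlt => /orP [/eqP -> //|]; rewrite ltnS => /IH H.
apply: (subset_trans H) => /=; exact: subsetUl.
Qed.

Lemma Sseq_sub (S : {set Cmin}) g i : Sseq S g i \subset Useq S g i.
Proof. case: i => [|i] /=; first by rewrite sub0set. exact: subsetUr. Qed.

Lemma Sseq_disj (S : {set Cmin}) g i j : (i < j)%N ->
  [disjoint Sseq S g i & Sseq S g j].
Proof.
case: j => [//|j]; rewrite ltnS => hij /=.
have H1 := subset_trans (Sseq_sub S g i) (@Useq_mono S g _ _ hij).
rewrite disjoint_sym -setI_eq0; apply/eqP/setP => x; rewrite !inE.
apply/negbTE; apply/negP => /andP [/andP [hx _] hy].
by move/subsetP: H1 => /(_ x hy); rewrite (negbTE hx).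
Qed.

Lemma maxdev_cases (R : realType) S U :
  maxdev R S U = 0 \/ exists2 s, s \in Gminus R S U & maxdev R S U = `|delta R S U s|.
Proof.
rewrite /maxdev; apply: (big_ind (fun x => x = 0 \/ exists2 s, s \in Gminus R S U & x = `|delta R S U s|)).
- by left.
- move=> x y hx hy; rewrite /Num.max; case: ifP => _; [exact: hy|exact: hx].
- by move=> s hs; right; exists s.
Qed.

Theorem lemma4p11 (R : realType) (S : {set Cmin}) (k : nat)
    (g : nat -> {perm Cmin})
    (HSanti : forall x, x \in S -> exists2 y, y \in S & rv y = - (rv x : 'rV[R]_24))
    (HSdot : forall x y, x \in S -> y \in S -> x != y ->
                inner (rv x : 'rV[R]_24) (rv y) <= 1)
    (Hk : (1 <= k)%N)
    (Hg1 : g 1%N = 1%g)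
    (HgCo : forall j, (2 <= j <= k)%N -> g j \in Co0 R)
    (HSj : forall j, (2 <= j <= k)%N ->
       (#|S|%:R : R) * (1 - (\sum_(1 <= i < j) (#|Sseq S g i|%:R : R)) / #|{: Cmin}|%:R)
         <= #|Sseq S g j|%:R)
    (Hmax : Eexp R S (Useq S g k) - (floor2 (Eexp R S (Useq S g k)))%:~R + 2
              <= maxdev R S (Useq S g k)) :
  exists h : {perm Cmin}, h \in Co0 R /\
    (#|S|%:R + 2 - (floor2 (Eexp R S (Useq S g k)))%:~R
       <= (#|Sseq S (extend g k h) k.+1|%:R : R)) /\
    (forall i j, (1 <= i)%N -> (i < j)%N -> (j <= k.+1)%N ->
       [disjoint Sseq S (extend g k h) i & Sseq S (extend g k h) j]).
Proof.
set E := Eexp R S (Useq S g k).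
have hF : (floor2 E)%:~R <= E.
  rewrite /floor2 intrM.
  have h := floor_le (E / 2).
  have e2 : ((2%:Z)%:~R : R) = 2 by [].
  rewrite e2; lra.
case: (maxdev_cases R S (Useq S g k)) => [h0|[s hs hm]].
  by exfalso; move: Hmax; rewrite h0 -/E; lra.
move: hs; rewrite inE => /andP [hsC hneg].
exists s; split => //; split; last by move=> i j _ hij _; exact: Sseq_disj.
rewrite [Sseq _ _ _]/=.
have -> : Useq S (extend g k s) k = Useq S g k.
  apply: Useq_ext => j hj; rewrite /extend.
  by have -> : (j == k.+1) = false by apply/negbTE; rewrite neq_ltn ltnS hj.
rewrite {1}/extend eqxx.
have hc := cardsID (Useq S g k) (s @: S).
rewrite card_imset in hc; last exact: perm_inj.
rewrite -hc natrD.
move: Hmax; rewrite hm ltr0_norm // /delta -/E => Hm.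
lra.
Qed.
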